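(* Let $\mathfrak K$ be a cone of $\mathbb R^d$-valued predictable $S$-integrable processes (i.e. $\vartheta\in\mathfrak K$, $c\ge 0$ imply $c\vartheta\in\mathfrak K$) such that $\vartheta\cdot S_T\in L^2(P)$ for all $\vartheta\in\mathfrak K$. Let $\tilde\varphi\in\mathfrak K$ be a solution of the problem $$\text{minimise } E\big[|1-\vartheta\cdot S_T|^2\big] \text{ over } \vartheta\in\mathfrak K,$$ and assume $\tilde\varphi\cdot S_T\not\equiv 1$ and $E[\tilde\varphi\cdot S_T]>0$. Then, for $\gamma>0$, the strategy $$\tilde\vartheta=\frac{1}{\gamma}\,\frac{1}{E[1-\tilde\varphi\cdot S_T]}\,\tilde\varphi$$ solves the problem: maximise $E[V_T(x,\vartheta)]-\frac{\gamma}{2}\mathrm{Var}[V_T(x,\vartheta)]$ over $\vartheta\in\mathfrak K$; and for $m>x$ the strategy $$\tilde\vartheta^{(m,x)}=\frac{m-x}{E[\tilde\varphi\cdot S_T]}\,\tilde\varphi$$ solves the problem: minimise $\mathrm{Var}[V_T(x,\vartheta)]$ subject to $E[V_T(x,\vartheta)]=m$ and $\vartheta\in\mathfrak K$.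
   Context: $(\Omega,\mathcal F,P)$ is a probability space with a filtration $(\mathcal F_t)_{0\le t\le T}$ satisfying the usual conditions, $T>0$ fixed. $S$ is an $\mathbb R^d$-valued RCLL semimartingale (discounted prices of $d$ risky assets; the riskless asset has price $1$). For $x\in\mathbb R$ and an $S$-integrable predictable $\vartheta$, $V_t(x,\vartheta):=x+\int_0^t\vartheta_u\,dS_u=x+\vartheta\cdot S_t$. *)

(* Defs.v *)
From HB Require Import structures.
From mathcomp Require Import all_boot all_order all_algebra.
From mathcomp Require Import all_classical all_reals all_analysis.
Set Implicit Arguments. Unset Strict Implicit. Unset Printing Implicit Defensive.
Import Order.TTheory GRing.Theory Num.Theory.
Local Open Scope ring_scope.

Definition expectR (R : realType) (d : measure_display) (T : measurableType d)
  (P : probability T R) (X : T -> R) : R :=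
  fine (\int[P]_w (X w)%:E).

Definition varianceR (R : realType) (d : measure_display) (T : measurableType d)
  (P : probability T R) (X : T -> R) : R :=
  expectR P (fun w => (X w - expectR P X) ^+ 2).

Definition inL2 (R : realType) (d : measure_display) (T : measurableType d)
  (P : probability T R) (X : T -> R) : Prop :=
  measurable_fun setT X /\ P.-integrable setT (fun w => (X w ^+ 2)%:E).

(* Terminal wealth V_T(x, theta) = x + theta . S_T, where [gain theta]
   stands for the terminal value theta . S_T of the stochastic integral. *)
Definition wealth (R : realType) (T : Type) (Theta : Type)
  (gain : Theta -> T -> R) (x : R) (th : Theta) : T -> R :=
  fun w => x + gain th w.

(* Main.v *)
Require Import Defs.
From HB Require Import structures.
From mathcomp Require Import all_boot all_order all_algebra.
From mathcomp Require Import all_classical all_reals all_analysis.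
From mathcomp Require Import ring lra measurable_realfun.
Import Order.TTheory GRing.Theory Num.Theory.
Local Open Scope ring_scope.
Local Open Scope classical_set_scope.

Section Mom.
Context (R : realType) (d : measure_display) (T : measurableType d)
  (P : probability T R).

Lemma L2_int (g : T -> R) : inL2 P g -> P.-integrable setT (EFin \o g).
Proof.
move=> [mg ig2].
apply: (@le_integrable _ _ _ P setT measurableT _ (fun w => (1 + g w ^+ 2)%:E)).
- exact/measurable_EFinP.
- move=> w _ /=; rewrite lee_fin.
  have h1 : 0 <= 1 + g w ^+ 2 by rewrite addr_ge0 // sqr_ge0.
  rewrite [X in _ <= X]ger0_norm //.
  case: (lerP 0 (g w)) => h; [rewrite ger0_norm // | rewrite ltr0_norm //]; nra.
- under eq_fun do rewrite EFinD.
  apply: integrableD => //; exact: (finite_measure_integrable_cst P 1 measurableT).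
Qed.
Arguments L2_int {g}.

Lemma mom (g : T -> R) (F : T -> R) (a b c : R) : inL2 P g ->
  (forall w, F w = a + b * g w + c * g w ^+ 2) ->
  expectR P F = a + b * expectR P g + c * expectR P (fun w => g w ^+ 2).
Proof.
move=> hg hF; have ig := L2_int hg; have [_ ig2] := hg.
rewrite /expectR.
have -> : (fun w => (F w)%:E) = (fun w => (a%:E + b%:E * (g w)%:E) + c%:E * (g w ^+ 2)%:E)%E.
  by apply: funext => w; rewrite hF !EFinD !EFinM.
have ia : P.-integrable setT (fun w => a%:E)%E.
  exact: (finite_measure_integrable_cst P a measurableT).
have ib : P.-integrable setT (fun w => b%:E * (g w)%:E)%E.
  exact: (integrableZl measurableT).
have i1 : P.-integrable setT (fun w => a%:E + b%:E * (g w)%:E)%E.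
  exact: (integrableD measurableT).
have i2 : P.-integrable setT (fun w => c%:E * (g w ^+ 2)%:E)%E.
  exact: (integrableZl measurableT).
rewrite (integralD measurableT) //.
rewrite (integralD measurableT) //.
rewrite (integralZl measurableT) // (integralZl measurableT) //.
have -> : (\int[P]_(w in setT) a%:E = a%:E)%E.
  rewrite integral_cst //.
  by rewrite -[RHS]mule1; congr (_ * _)%E; exact: probability_setT.
have f1 := integrable_fin_num measurableT ig.
have f2 := integrable_fin_num measurableT ig2.
move: f1 f2; set I1 := (\int[P]_x (g x)%:E)%E; set I2 := (\int[P]_x (g x ^+ 2)%:E)%E => f1 f2.
rewrite [in LHS]fineD ?fin_numD ?fin_numM //.
rewrite [in LHS]fineD ?fin_numM //.
by rewrite !fineM.
Qed.

Lemma quad_int (g : T -> R) (a b c : R) : inL2 P g ->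
  P.-integrable setT (fun w => (a + b * g w + c * g w ^+ 2)%:E).
Proof.
move=> hg; have ig := L2_int hg; have [_ ig2] := hg.
have -> : (fun w => (a + b * g w + c * g w ^+ 2)%:E) = (fun w => (a%:E + b%:E * (g w)%:E) + c%:E * (g w ^+ 2)%:E)%E.
  by apply: funext => w; rewrite !EFinD !EFinM.
have ia : P.-integrable setT (fun w => a%:E)%E.
  exact: (finite_measure_integrable_cst P a measurableT).
have ib : P.-integrable setT (fun w => b%:E * (g w)%:E)%E.
  exact: (integrableZl measurableT).
have i1 : P.-integrable setT (fun w => a%:E + b%:E * (g w)%:E)%E.
  exact: (integrableD measurableT).
have i2 : P.-integrable setT (fun w => c%:E * (g w ^+ 2)%:E)%E.
  exact: (integrableZl measurableT).
exact: (integrableD measurableT).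
Qed.

Lemma sq0_ae (g : T -> R) : inL2 P g ->
  expectR P (fun w => (1 - g w) ^+ 2) = 0 -> {ae P, forall w, g w = 1}.
Proof.
move=> hg hE.
have ifn : P.-integrable setT (fun w => ((1 - g w) ^+ 2)%:E).
  have -> : (fun w => ((1 - g w) ^+ 2)%:E) = (fun w => (1 + (-2) * g w + 1 * g w ^+ 2)%:E).
    by apply: funext => w; congr EFin; ring.
  exact: quad_int.
have mf := measurable_int P ifn.
have hI : (\int[P]_(w in setT) `|((1 - g w) ^+ 2)%:E| = 0)%E.
  under eq_integral do rewrite gee0_abs ?lee_fin ?sqr_ge0//.
  have := integrable_fin_num measurableT ifn.
  move: hE; rewrite /expectR => hE hfin.
  by rewrite -[LHS]fineK // hE.
have := (ae_eq_integral_abs P measurableT mf).1 hI.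
apply: filterS => w /(_ I) /= [].
by move/eqP; rewrite sqrf_eq0 subr_eq0 => /eqP <-.
Qed.

Lemma expect_ge0 (F : T -> R) : (forall w, 0 <= F w) -> 0 <= expectR P F.
Proof.
move=> hF; rewrite /expectR fine_ge0 // integral_ge0 // => w _.
by rewrite lee_fin.
Qed.

End Mom.
Arguments L2_int {R d T P g}.
Arguments mom {R d T P g F} a b c.
Arguments sq0_ae {R d T P g}.


Theorem lemma2p1 (R : realType) (d : measure_display) (T : measurableType d)
  (P : probability T R)
  (Theta : lmodType R)            (* S-integrable predictable processes *)
  (gain : Theta -> T -> R)        (* theta |-> theta . S_T *)
  (K : set Theta)
  (hK_cone : forall th c, K th -> 0 <= c -> K (c *: th))
  (hgain_hom : forall th c, K th -> 0 <= c ->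
      gain (c *: th) = (fun w => c * gain th w))
  (hK_L2 : forall th, K th -> inL2 P (gain th))
  (phi : Theta) (hphiK : K phi)
  (hphi_opt : forall th, K th ->
      expectR P (fun w => (1 - gain phi w) ^+ 2)
        <= expectR P (fun w => (1 - gain th w) ^+ 2))
  (hphi_not1 : ~ {ae P, forall w, gain phi w = 1})
  (hphi_pos : 0 < expectR P (gain phi)) :
  (forall (gamma x : R), 0 < gamma ->
     let th1 := (gamma^-1 * (expectR P (fun w => 1 - gain phi w))^-1) *: phi in
     K th1 /\
     forall th, K th ->
       expectR P (wealth gain x th) - gamma / 2 * varianceR P (wealth gain x th)
         <= expectR P (wealth gain x th1)
            - gamma / 2 * varianceR P (wealth gain x th1))
  /\
  (forall (x m : R), x < m ->
     let th2 := ((m - x) / expectR P (gain phi)) *: phi in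
     [/\ K th2, expectR P (wealth gain x th2) = m &
     forall th, K th -> expectR P (wealth gain x th) = m ->
       varianceR P (wealth gain x th2) <= varianceR P (wealth gain x th)]).
Proof.
pose Mu th := expectR P (gain th).
pose Sq th := expectR P (fun w => gain th w ^+ 2).
have hW : forall x th, K th -> expectR P (wealth gain x th) = x + Mu th.
  move=> x th hth; rewrite (mom (x) (1) (0) (hK_L2 _ hth)).
    by rewrite /Mu; ring.
  by move=> w; rewrite /wealth; ring.
have hV : forall x th, K th -> varianceR P (wealth gain x th) = Sq th - Mu th ^+ 2.
  move=> x th hth; rewrite /varianceR hW //.
  rewrite (mom (Mu th ^+ 2) (-2 * Mu th) (1) (hK_L2 _ hth)).
    by rewrite /Sq /Mu; ring.
  by move=> w; rewrite /wealth; ring.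
have hO : forall th, K th -> expectR P (fun w => (1 - gain th w) ^+ 2) = 1 - 2 * Mu th + Sq th.
  move=> th hth; rewrite (mom (1) (-2) (1) (hK_L2 _ hth)).
    by rewrite /Sq /Mu; ring.
  by move=> w; ring.
have hVge : forall th, K th -> Mu th ^+ 2 <= Sq th.
  move=> th hth; rewrite -subr_ge0 -(hV 0 th hth).
  by apply: expect_ge0 => w; rewrite sqr_ge0.
have hSM : forall th c, K th -> 0 <= c -> Mu (c *: th) = c * Mu th.
  move=> th c hth hc; rewrite /Mu hgain_hom //.
  rewrite (mom (0) (c) (0) (hK_L2 _ hth)); first ring.
  by move=> w; ring.
have hSS : forall th c, K th -> 0 <= c -> Sq (c *: th) = c ^+ 2 * Sq th.
  move=> th c hth hc; rewrite /Sq hgain_hom //.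
  rewrite (mom (0) (0) (c ^+ 2) (hK_L2 _ hth)); first ring.
  by move=> w; ring.
have hopt : forall th, K th -> 1 - 2 * Mu phi + Sq phi <= 1 - 2 * Mu th + Sq th.
  by move=> th hth; rewrite -hO // -hO //; exact: hphi_opt.
set a := Mu phi.
have ha : 0 < a by [].
have hab : Sq phi = a.
  have hb : 0 < Sq phi by apply: lt_le_trans (hVge _ hphiK); rewrite exprn_gt0.
  set b := Sq phi in hb *.
  have hc : 0 <= a / b by rewrite divr_ge0 // ltW.
  have := hopt _ (hK_cone _ _ hphiK hc).
  rewrite hSM // hSS // -/b.
  have hcb : a / b * b = a by rewrite divfK // gt_eqF.
  move: (a / b) hc hcb => c hc hcb h.
  have e1 : c ^+ 2 * b = c * a by rewrite expr2 -mulrA hcb.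
  rewrite e1 in h.
  have e2 : c * a * b = a * a by rewrite -mulrA (mulrC a) mulrA hcb.
  rewrite -/a in h.
  have h' : b - 2 * a <= - (c * a) by lra.
  have h3 : (b - 2 * a) * b <= - (c * a) * b by rewrite ler_wpM2r // ltW.
  have h2 : (a - b) ^+ 2 <= 0.
    have -> : (a - b) ^+ 2 = (b - 2 * a) * b + a * a by ring.
    by rewrite mulNr e2 in h3; lra.
  have : (a - b) ^+ 2 = 0 by apply/eqP; rewrite eq_le h2 sqr_ge0.
  by move/eqP; rewrite sqrf_eq0 subr_eq0 => /eqP ->.
have ha1 : a < 1.
  have h1 : a <= 1.
    have := hVge _ hphiK; rewrite hab -/a => h; nra.
  rewrite lt_neqAle h1 andbT; apply/negP => /eqP ea.
  apply: hphi_not1; apply: (sq0_ae (hK_L2 _ hphiK)).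
  by rewrite hO // hab -/a ea; ring.
have hkey : forall th, K th -> 0 < Mu th -> Mu th ^+ 2 <= a * Sq th.
  move=> th hth hmu.
  have hs : 0 < Sq th by apply: lt_le_trans (hVge _ hth); rewrite exprn_gt0.
  have hc : 0 <= Mu th / Sq th by rewrite divr_ge0 // ltW.
  have := hopt _ (hK_cone _ _ hth hc).
  rewrite hSM // hSS // hab -/a.
  have hcb : Mu th / Sq th * Sq th = Mu th by rewrite divfK // gt_eqF.
  move: (Mu th / Sq th) hc hcb => c hc hcb h.
  nra.
have e1 : expectR P (fun w => 1 - gain phi w) = 1 - a.
  rewrite (mom 1 (-1) 0 (hK_L2 _ hphiK)); first by rewrite -/(Mu phi) -/a; ring.
  by move=> w; ring.
split.
  move=> gamma x hg th1; rewrite /th1 e1.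
  set k := gamma^-1 * (1 - a)^-1.
  have h1a : 0 < 1 - a by rewrite subr_gt0.
  have hk0 : 0 <= k by rewrite mulr_ge0 // invr_ge0 ltW.
  have hk : k * gamma * (1 - a) = 1.
    rewrite /k; field.
    by rewrite !gt_eqF.
  have hK1 : K (k *: phi) by exact: hK_cone.
  split => // th hth; rewrite !hW // !hV // hSM // hSS // -/a hab.
  have -> : gamma / 2 * (k ^+ 2 * a - (k * a) ^+ 2) = (k * gamma * (1 - a)) * (k * a) / 2 by ring.
  rewrite hk mul1r.
  have hka : 0 <= k * a by rewrite mulr_ge0 // ltW.
  have hV0 := hVge _ hth.
  case: (lerP (Mu th) 0) => hm.
    have : 0 <= gamma / 2 * (Sq th - Mu th ^+ 2) by rewrite mulr_ge0 ?subr_ge0 // divr_ge0 // ltW.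
    lra.
  have hk2 := hkey _ hth hm.
  set mu := Mu th in hm hk2 hV0 *; set s := Sq th in hk2 hV0 *.
  have q : 0 <= k * (gamma * (1 - a) * mu - a) ^+ 2 by rewrite mulr_ge0 // sqr_ge0.
  have q' : k * (gamma * (1 - a) * mu - a) ^+ 2 = gamma * (1 - a) * mu ^+ 2 * (k * gamma * (1 - a)) - 2 * a * mu * (k * gamma * (1 - a)) + k * a ^+ 2 by ring.
  rewrite q' hk !mulr1 in q.
  have r : mu ^+ 2 * (1 - a) <= a * (s - mu ^+ 2) by lra.
  have r' : gamma * (mu ^+ 2 * (1 - a)) <= gamma * (a * (s - mu ^+ 2)) by rewrite ler_wpM2l // ltW.
  rewrite -(ler_pM2l ha).
  lra.
move=> x m hxm th2; rewrite /th2.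
set k := (m - x) / a.
have hk0 : 0 <= k by rewrite divr_ge0 ?subr_ge0 // ltW.
have hka : k * a = m - x by rewrite /k divfK // gt_eqF.
have hK2 : K (k *: phi) by exact: hK_cone.
split => //.
  by rewrite hW // hSM // -/a hka; ring.
move=> th hth; rewrite hW // => hm.
rewrite !hV // hSM // hSS // -/a hab.
have hmu : Mu th = m - x by lra.
have e : k ^+ 2 * a = k * (m - x) by rewrite expr2 -mulrA hka.
rewrite e hka -hmu.
have hk2 : Mu th ^+ 2 <= a * Sq th by apply: hkey => //; rewrite hmu subr_gt0.
rewrite lerD2r -(ler_pM2l ha).
have -> : a * (k * Mu th) = Mu th ^+ 2 by rewrite mulrA (mulrC a) hka hmu expr2.
exact: hk2.
Qed.
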